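(* Let $\Omega\subset\mathbb{R}^3$ be a domain and let $\varphi:\Omega\to\mathbb{C}$ be a twice differentiable function with $\varphi\neq 0$ in $\Omega$. Put $\vec\alpha=\frac{\operatorname{grad}\varphi}{\varphi}$ and $v=\frac{\Delta\varphi}{\varphi}$, so that $\varphi$ solves the Schrödinger equation $-\Delta\varphi+v\varphi=0$. Let $\psi:\Omega\to\mathbb{C}$ be a twice differentiable function which is another solution of $-\Delta\psi+v\psi=0$ in $\Omega$. Then the function $$\vec f=(D-\vec\alpha)\psi=D\psi-\vec\alpha\,\psi$$ satisfies $(D+M^{\vec\alpha})\vec f=0$, i.e. $D\vec f+\vec f\cdot\vec\alpha=0$, in $\Omega$.
   Context: $\mathbb{H}(\mathbb{C})$ denotes the algebra of complex quaternions (biquaternions) $q=\sum_{k=0}^3 q_k i_k$, $q_k\in\mathbb{C}$, where $i_0=1$ and $i_1,i_2,i_3$ are the standard quaternionic imaginary units; vector parts $\vec q=\sum_{k=1}^3q_ki_k$ are identified with vectors of $\mathbb{C}^3$, and the product is $p\cdot q=p_0q_0-\langle\vec p,\vec q\rangle+[\vec p\times\vec q]+p_0\vec q+q_0\vec p$. For a biquaternion $p$, $M^p$ denotes right multiplication: $M^pq=q\cdot p$. The Moisil–Theodoresco operator is $Df=\sum_{k=1}^3 i_k\partial_k f$; for a scalar function $\psi$, $D\psi=\operatorname{grad}\psi$, and for $f=f_0+\vec f$, $Df=-\operatorname{div}\vec f+\operatorname{grad}f_0+\operatorname{rot}\vec f$. *)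

(* Defs.v *)
From Stdlib Require Import Reals.
From Coquelicot Require Import Coquelicot.

Definition R3 := (R * R * R)%type.

Definition shift (k : nat) (x : R3) (t : R) : R3 :=
  match x with (x1, x2, x3) =>
    match k with
    | 1%nat => (x1 + t, x2, x3)%R
    | 2%nat => (x1, x2 + t, x3)%R
    | _ => (x1, x2, x3 + t)%R
    end
  end.

Definition pd (k : nat) (f : R3 -> C) (x : R3) : C :=
  (Derive (fun t => Re (f (shift k x t))) 0, Derive (fun t => Im (f (shift k x t))) 0).

Definition connected3 (S : R3 -> Prop) : Prop :=
  forall U V : R3 -> Prop, open U -> open V ->
    (forall x, S x -> U x \/ V x) ->
    (exists x, S x /\ U x) -> (exists x, S x /\ V x) ->
    exists x, S x /\ U x /\ V x.
Definition domain3 (S : R3 -> Prop) : Prop := open S /\ connected3 S.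

Definition twice_diff_on (Om : R3 -> Prop) (f : R3 -> C) : Prop :=
  forall x, Om x ->
    ex_filterdiff f (locally x) /\
    forall k, (1 <= k <= 3)%nat -> ex_filterdiff (pd k f) (locally x).

Definition laplacian (f : R3 -> C) (x : R3) : C :=
  Cplus (Cplus (pd 1 (pd 1 f) x) (pd 2 (pd 2 f) x)) (pd 3 (pd 3 f) x).

(* Complex vectors C^3 and biquaternions H(C) = C x C^3 (scalar part, vector part). *)
Definition CV := (C * C * C)%type.
Definition BQ := (C * CV)%type.

Definition C0 : C := RtoC 0.
Definition vzero : CV := (C0, C0, C0).
Definition vadd (p q : CV) : CV :=
  match p, q with (p1, p2, p3), (q1, q2, q3) =>
    (Cplus p1 q1, Cplus p2 q2, Cplus p3 q3) end.
Definition vscal (a : C) (p : CV) : CV :=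
  match p with (p1, p2, p3) => (Cmult a p1, Cmult a p2, Cmult a p3) end.
Definition vdot (p q : CV) : C :=
  match p, q with (p1, p2, p3), (q1, q2, q3) =>
    Cplus (Cplus (Cmult p1 q1) (Cmult p2 q2)) (Cmult p3 q3) end.
Definition vcross (p q : CV) : CV :=
  match p, q with (p1, p2, p3), (q1, q2, q3) =>
    (Cminus (Cmult p2 q3) (Cmult p3 q2),
     Cminus (Cmult p3 q1) (Cmult p1 q3),
     Cminus (Cmult p1 q2) (Cmult p2 q1)) end.

Definition qadd (p q : BQ) : BQ := (Cplus (fst p) (fst q), vadd (snd p) (snd q)).
Definition qopp (p : BQ) : BQ := (Copp (fst p), vscal (RtoC (-1)) (snd p)).
Definition qsub (p q : BQ) : BQ := qadd p (qopp q).
Definition qzero : BQ := (C0, vzero).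

Definition qmul (p q : BQ) : BQ :=
  (Cminus (Cmult (fst p) (fst q)) (vdot (snd p) (snd q)),
   vadd (vadd (vcross (snd p) (snd q)) (vscal (fst p) (snd q))) (vscal (fst q) (snd p))).

Definition qscal (a : C) : BQ := (a, vzero).
Definition qvec (v : CV) : BQ := (C0, v).

Definition Mr (p : BQ) (q : BQ) : BQ := qmul q p.

Definition C1 : C := RtoC 1.
Definition i1 : BQ := qvec (C1, C0, C0).
Definition i2 : BQ := qvec (C0, C1, C0).
Definition i3 : BQ := qvec (C0, C0, C1).

Definition pdq (k : nat) (f : R3 -> BQ) (x : R3) : BQ :=
  (pd k (fun y => fst (f y)) x,
   (pd k (fun y => fst (fst (snd (f y)))) x,
    pd k (fun y => snd (fst (snd (f y)))) x,
    pd k (fun y => snd (snd (f y))) x)).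

Definition Dop (f : R3 -> BQ) (x : R3) : BQ :=
  qadd (qadd (qmul i1 (pdq 1 f x)) (qmul i2 (pdq 2 f x))) (qmul i3 (pdq 3 f x)).

Definition grad (f : R3 -> C) (x : R3) : CV := (pd 1 f x, pd 2 f x, pd 3 f x).

(* Main.v *)
Require Import Defs.
From Stdlib Require Import Reals Lra Lia FunctionalExtensionality.
From Coquelicot Require Import Coquelicot.
Definition ev (k : nat) : R3 :=
  match k with 1%nat => (1,0,0) | 2%nat => (0,1,0) | _ => (0,0,1) end%R.
Lemma shift_eq k (x : R3) t : shift k x t = plus x (scal t (ev k)).
Proof.
  destruct x as [[x1 x2] x3].
  destruct k as [|[|[|k]]]; simpl; 
  (apply injective_projections; [apply injective_projections|]); simpl;
  unfold plus, scal, mult; simpl; change (@mult (AbsRing.Ring R_AbsRing)) with Rmult; ring.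
Qed.

Lemma is_derive_eq (f : R -> R) x l l' : is_derive f x l -> l = l' -> is_derive f x l'.
Proof. intros H ->; exact H. Qed.

Lemma line_deriv (u : R3 -> R) (y v : R3) r0 L :
  filterdiff u (locally (plus y (scal r0 v))) L ->
  is_derive (fun r => u (plus y (scal r v))) r0 (L v).
Proof.
  intros H.
  assert (Hf : is_derive (fun r : R => plus y (scal r v)) r0 v).
  { eapply filterdiff_ext_lin.
    apply (is_derive_plus (fun _ => y) (fun r => scal r v) r0 zero v).
    apply is_derive_const.
    assert (Hid := is_derive_scal_l (fun r : R => r) r0 one v (is_derive_id r0)).
    rewrite scal_one in Hid. exact Hid.
    intros z. simpl. rewrite plus_zero_l. reflexivity. }
  unfold is_derive.
  eapply filterdiff_ext_lin.
  apply (filterdiff_comp' (fun r : R => plus y (scal r v)) u r0 _ L Hf H).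
  intros z. simpl. rewrite (linear_scal L (proj1 H)). reflexivity.
Qed.
Lemma mvt0 (f df : R -> R) h : 0 < h ->
  (forall s, 0 <= s <= h -> is_derive f s (df s)) ->
  exists c, 0 <= c <= h /\ f h - f 0 = df c * h.
Proof.
  intros Hh Hd.
  destruct (MVT_gen f 0 h df) as [c [Hc E]].
  - intros s Hs. rewrite Rmin_left, Rmax_right in Hs by lra. apply Hd; lra.
  - intros s Hs. rewrite Rmin_left, Rmax_right in Hs by lra.
    apply continuity_pt_filterlim. apply (ex_derive_continuous f).
    exists (df s). apply Hd; lra.
  - rewrite Rmin_left, Rmax_right in Hc by lra. exists c. split; [lra|].
    rewrite E. ring.
Qed.

Lemma young2 (w a b : R -> R -> R) (A B al be : R) :
  (exists r, 0 < r /\ forall s t, Rabs s < r -> Rabs t < r ->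
      is_derive (fun s' => w s' t) s (a s t) /\ is_derive (fun t' => w s t') t (b s t)) ->
  (forall eps, 0 < eps -> exists d, 0 < d /\ forall s t, Rabs s < d -> Rabs t < d ->
      Rabs (a s t - a 0 0 - al * s - A * t) <= eps * (Rabs s + Rabs t)) ->
  (forall eps, 0 < eps -> exists d, 0 < d /\ forall s t, Rabs s < d -> Rabs t < d ->
      Rabs (b s t - b 0 0 - B * s - be * t) <= eps * (Rabs s + Rabs t)) ->
  A = B.
Proof.
  intros [r [Hr Hd]] Ha Hb.
  destruct (Req_dec A B) as [|HAB]; [assumption|exfalso].
  set (eps := Rabs (A - B) / 12).
  assert (He : 0 < eps) by (unfold eps; assert (0 < Rabs (A - B)) by (apply Rabs_pos_lt; lra); lra).
  destruct (Ha eps He) as [d1 [Hd1 Ha']].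
  destruct (Hb eps He) as [d2 [Hd2 Hb']].
  set (h := Rmin r (Rmin d1 d2) / 2).
  assert (Hh0 : 0 < h) by (unfold h; repeat apply Rmin_case; lra).
  assert (Hhr : h < r) by (unfold h; assert (Rmin r (Rmin d1 d2) <= r) by apply Rmin_l; lra).
  assert (Hh1 : h < d1) by (unfold h; assert (Rmin r (Rmin d1 d2) <= d1) by
     (eapply Rle_trans; [apply Rmin_r|apply Rmin_l]); lra).
  assert (Hh2 : h < d2) by (unfold h; assert (Rmin r (Rmin d1 d2) <= d2) by
     (eapply Rle_trans; [apply Rmin_r|apply Rmin_r]); lra).
  assert (Habs : forall s, 0 <= s <= h -> Rabs s = s) by (intros; apply Rabs_pos_eq; lra).
  destruct (mvt0 (fun s => w s h - w s 0) (fun s => a s h - a s 0) h Hh0) as [c [Hc Ec]].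
  { intros s Hs. apply (is_derive_minus (fun s => w s h) (fun s => w s 0));
    apply Hd; rewrite ?Habs, ?Rabs_R0; lra. }
  destruct (mvt0 (fun t => w h t - w 0 t) (fun t => b h t - b 0 t) h Hh0) as [e [He' Ee]].
  { intros t Ht. apply (is_derive_minus (fun t => w h t) (fun t => w 0 t));
    apply Hd; rewrite ?Habs, ?Rabs_R0; lra. }
  assert (X1 := Ha' c h). assert (X2 := Ha' c 0).
  assert (Y1 := Hb' h e). assert (Y2 := Hb' 0 e).
  rewrite ?Habs, ?Rabs_R0 in X1, X2, Y1, Y2 by lra.
  specialize (X1 ltac:(lra) ltac:(lra)). specialize (X2 ltac:(lra) ltac:(lra)).
  specialize (Y1 ltac:(lra) ltac:(lra)). specialize (Y2 ltac:(lra) ltac:(lra)).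
  assert (EXY : a c h - a c 0 = b h e - b 0 e).
  { apply (Rmult_eq_reg_r h); [|lra]. rewrite <- Ec, <- Ee. ring. }
  assert (K : Rabs ((A - B) * h) <= 6 * eps * h).
  { replace ((A - B) * h) with
      (- (a c h - a 0 0 - al * c - A * h) + (a c 0 - a 0 0 - al * c - A * 0)
       + (b h e - b 0 0 - B * h - be * e) - (b 0 e - b 0 0 - B * 0 - be * e)
       + ((a c h - a c 0) - (b h e - b 0 e))) by ring.
    rewrite EXY, Rminus_diag, Rplus_0_r.
    eapply Rle_trans; [apply Rabs_triang|].
    eapply Rle_trans; [apply Rplus_le_compat_r, Rabs_triang|].
    eapply Rle_trans; [apply Rplus_le_compat_r, Rplus_le_compat_r, Rabs_triang|].
    rewrite Rabs_Ropp, Rabs_Ropp. nra. }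
  rewrite Rabs_mult, (Rabs_pos_eq h) in K by lra.
  assert (Rabs (A - B) <= 6 * eps) by nra.
  unfold eps in H. assert (0 < Rabs (A - B)) by (apply Rabs_pos_lt; lra). lra.
Qed.

Lemma RminusN (a b : R) : @minus (NormedModule.AbelianGroup R_AbsRing R_NormedModule) a b = a - b.
Proof. reflexivity. Qed.
Lemma RscalN (a b : R) : @scal R_AbsRing (NormedModule.ModuleSpace R_AbsRing R_NormedModule) a b = a * b.
Proof. reflexivity. Qed.
Lemma Rnorm (x : R) : norm x = Rabs x. Proof. reflexivity. Qed.
Lemma Rminus' (x y : R) : minus x y = x - y. Proof. reflexivity. Qed.
Lemma Rscal (x y : R) : scal x y = x * y. Proof. reflexivity. Qed.
Lemma Rplus' (x y : R) : plus x y = x + y. Proof. reflexivity. Qed.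
Lemma Rabs' (x : R_AbsRing) : abs x = Rabs x. Proof. reflexivity. Qed.

Lemma scal0 (v : R3) : scal 0 v = zero.
Proof. exact (scal_zero_l v). Qed.

Definition P (k : nat) (u : R3 -> R) (y : R3) : R := Derive (fun t => u (shift k y t)) 0.

Lemma P_eq k u y L : filterdiff u (locally y) L -> P k u y = L (ev k).
Proof.
  intros H. unfold P.
  rewrite (Derive_ext _ (fun t => u (plus y (scal t (ev k))))) by (intros; rewrite shift_eq; reflexivity).
  apply is_derive_unique. apply line_deriv.
  rewrite scal0, plus_zero_r. exact H.
Qed.

Lemma ag_aux (G : AbelianGroup) (a b c : G) : plus (plus (plus (opp a) a) b) c = plus b c.
Proof. rewrite plus_opp_l, plus_zero_l. reflexivity. Qed.

Lemma ag_aux2 (G : AbelianGroup) (a b c : G) : plus (plus a b) c = plus (plus a c) b.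
Proof. rewrite <- !plus_assoc, (plus_comm b). reflexivity. Qed.

Definition R3N : NormedModule R_AbsRing :=
  prod_NormedModule _ (prod_NormedModule _ R_NormedModule R_NormedModule) R_NormedModule.

Lemma ag_aux3 (G : AbelianGroup) (a b c : G) : minus (plus (plus a b) c) a = plus b c.
Proof. unfold minus. rewrite (plus_comm _ (opp a)), !plus_assoc, plus_opp_l, plus_zero_l. reflexivity. Qed.

Section Pt.
Variables (x : R3) (j k : nat).
Definition pt (s t : R) : R3 :=
  @plus R3N (@plus R3N x (@scal _ R3N s (ev j))) (@scal _ R3N t (ev k)).

Lemma pt_minus s t : @minus R3N (pt s t) x = @plus R3N (@scal _ R3N s (ev j)) (@scal _ R3N t (ev k)).
Proof. unfold pt. apply ag_aux3. Qed.

Lemma pt_comm s t : pt s t = plus (plus x (scal t (ev k))) (scal s (ev j)).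
Proof. unfold pt. apply ag_aux2. Qed.

Lemma pt00 : pt 0 0 = x.
Proof. unfold pt. rewrite !scal0, !plus_zero_r. reflexivity. Qed.

Definition KK := @norm _ R3N (ev j) + @norm _ R3N (ev k) + 1.
Lemma KK_pos : 0 < KK.
Proof. unfold KK. assert (0 <= @norm _ R3N (ev j)) by apply norm_ge_0.
  assert (0 <= @norm _ R3N (ev k)) by apply norm_ge_0. lra. Qed.

Lemma pt_norm s t : @norm _ R3N (@minus R3N (pt s t) x) <= KK * (Rabs s + Rabs t).
Proof.
  rewrite pt_minus. eapply Rle_trans; [apply norm_triangle|].
  assert (H1 := @norm_scal _ R3N s (ev j)). assert (H2 := @norm_scal _ R3N t (ev k)).
  rewrite Rabs' in H1, H2.
  assert (0 <= @norm _ R3N (ev j)) by apply norm_ge_0.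
  assert (0 <= @norm _ R3N (ev k)) by apply norm_ge_0.
  assert (0 <= Rabs s) by apply Rabs_pos. assert (0 <= Rabs t) by apply Rabs_pos.
  unfold KK. nra.
Qed.

Lemma pt_ball (d : R) s t : 0 < d -> Rabs s < d / (2 * KK) -> Rabs t < d / (2 * KK) ->
  ball x d (pt s t).
Proof.
  intros Hd Hs Ht. apply (@norm_compat1 _ R3N).
  eapply Rle_lt_trans; [apply pt_norm|].
  assert (HK := KK_pos).
  assert (KK * (Rabs s + Rabs t) < KK * (2 * (d / (2 * KK)))) by
    (apply Rmult_lt_compat_l; lra).
  replace (KK * (2 * (d / (2 * KK)))) with d in H by (field; lra). exact H.
Qed.
End Pt.

Lemma filter_lim_self (y : R3) : is_filter_lim (locally y) y.
Proof. intros Q HQ. exact HQ. Qed.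

Lemma young_approx x j k (u : R3 -> R) L :
  filterdiff (P j u) (locally x) L ->
  forall eps, 0 < eps -> exists d, 0 < d /\ forall s t, Rabs s < d -> Rabs t < d ->
   Rabs (P j u (pt x j k s t) - P j u (pt x j k 0 0) - L (ev j) * s - L (ev k) * t)
     <= eps * (Rabs s + Rabs t).
Proof.
  intros [Hlin Hdom] eps He.
  assert (HK := KK_pos j k).
  destruct (Hdom x (filter_lim_self x) (mkposreal (eps / KK j k) ltac:(apply Rdiv_lt_0_compat; lra)))
    as [d Hd].
  exists (d / (2 * KK j k)). split. { apply Rdiv_lt_0_compat; [apply cond_pos|lra]. }
  intros s t Hs Ht.
  specialize (Hd (pt x j k s t) (pt_ball x j k d s t (cond_pos d) Hs Ht)).
  simpl in Hd. rewrite pt00.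
  rewrite pt_minus, (linear_plus L Hlin), !(linear_scal L Hlin) in Hd.
  rewrite <- (pt_minus x j k s t) in Hd.
  rewrite Rnorm, !Rminus', Rplus', !Rscal in Hd.
  eapply Rle_trans; [|eapply Rle_trans; [apply Hd|]].
  - right. replace (minus (P j u (pt x j k s t)) (P j u x) - (s * L (ev j) + scal t (L (ev k))))
      with (P j u (pt x j k s t) - P j u x - (s * L (ev j) + t * L (ev k))) by reflexivity.
    f_equal. change (@minus _ (P j u (pt x j k s t)) (P j u x)) with (P j u (pt x j k s t) - P j u x). change (@scal _ _ t (L (ev k))) with (t * L (ev k)). ring.
  - assert (H1 := pt_norm x j k s t).
    replace (eps * (Rabs s + Rabs t)) with (eps / KK j k * (KK j k * (Rabs s + Rabs t))) by (field; lra).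
    apply Rmult_le_compat_l; [apply Rlt_le, Rdiv_lt_0_compat; lra | exact H1].
Qed.

Lemma sym (u : R3 -> R) x j k :
  (exists r : posreal, forall y, ball x r y -> exists L, filterdiff u (locally y) L) ->
  (exists L, filterdiff (P j u) (locally x) L) ->
  (exists L, filterdiff (P k u) (locally x) L) ->
  P k (P j u) x = P j (P k u) x.
Proof.
  intros [r Hr] [Lj Hj] [Lk Hk].
  rewrite (P_eq k (P j u) x Lj Hj), (P_eq j (P k u) x Lk Hk).
  assert (HK := KK_pos j k).
  apply (young2 (fun s t => u (pt x j k s t)) (fun s t => P j u (pt x j k s t))
     (fun s t => P k u (pt x j k s t)) (Lj (ev k)) (Lk (ev j)) (Lj (ev j)) (Lk (ev k))).
  - exists (r / (2 * KK j k)). split. { apply Rdiv_lt_0_compat; [apply cond_pos|lra]. }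
    intros s t Hs Ht.
    destruct (Hr _ (pt_ball x j k r s t (cond_pos r) Hs Ht)) as [L HL].
    split.
    + rewrite (P_eq j u _ L HL).
      apply is_derive_ext with (f := fun s' => u (pt x k j t s')).
      { intros s'. rewrite (pt_comm x j k s' t). reflexivity. }
      apply line_deriv. change (filterdiff u (locally (pt x k j t s)) L).
      replace (pt x k j t s) with (pt x j k s t) by (exact (pt_comm x j k s t)). exact HL.
    + rewrite (P_eq k u _ L HL). unfold pt. apply line_deriv. exact HL.
  - apply young_approx. exact Hj.
  - intros eps He. destruct (young_approx x k j u Lk Hk eps He) as [d [Hd Hb]].
    exists d. split; [exact Hd|]. intros s t Hs Ht.
    specialize (Hb t s Ht Hs).
    replace (pt x k j t s) with (pt x j k s t) in Hb by (exact (pt_comm x j k s t)).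
    replace (pt x k j 0 0) with (pt x j k 0 0) in Hb by (rewrite !pt00; reflexivity).
    eapply Rle_trans; [|eapply Rle_trans; [apply Hb|]].
    + right. f_equal. ring.
    + right. ring.
Qed.

Lemma shift0 k (x : R3) : shift k x 0 = x.
Proof. rewrite shift_eq, scal0, plus_zero_r. reflexivity. Qed.

Lemma Rmc : forall n m : R_AbsRing, mult n m = mult m n.
Proof. intros; apply Rmult_comm. Qed.

Definition D1 k (F : R3 -> C) x (d : C) :=
  is_derive (fun t => Re (F (shift k x t))) 0 (Re d) /\
  is_derive (fun t => Im (F (shift k x t))) 0 (Im d).

Lemma D1_pd k F x d : D1 k F x d -> pd k F x = d.
Proof.
  intros [H1 H2]. unfold pd. destruct d as [d1 d2].
  f_equal; apply is_derive_unique; assumption.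
Qed.

Lemma fd_deriv (u : R3 -> R) x k L : filterdiff u (locally x) L ->
  is_derive (fun t => u (shift k x t)) 0 (P k u x).
Proof.
  intros H. rewrite (P_eq k u x L H).
  apply is_derive_ext with (f := fun t => u (plus x (scal t (ev k)))).
  { intros t. rewrite shift_eq. reflexivity. }
  apply line_deriv. rewrite scal0, plus_zero_r. exact H.
Qed.

Lemma fd_re (F : R3 -> C) y : ex_filterdiff F (locally y) ->
  exists L, filterdiff (fun z => Re (F z)) (locally y) L.
Proof.
  intros [l Hl]. exists (fun z => fst (l z)).
  apply (filterdiff_comp' F (fun c => fst c) y l (fun c => fst c) Hl).
  apply filterdiff_linear. apply is_linear_fst.
Qed.

Lemma fd_im (F : R3 -> C) y : ex_filterdiff F (locally y) ->
  exists L, filterdiff (fun z => Im (F z)) (locally y) L.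
Proof.
  intros [l Hl]. exists (fun z => snd (l z)).
  apply (filterdiff_comp' F (fun c => snd c) y l (fun c => snd c) Hl).
  apply filterdiff_linear. apply is_linear_snd.
Qed.

Lemma D1_basic k F x : ex_filterdiff F (locally x) -> D1 k F x (pd k F x).
Proof.
  intros H. destruct (fd_re F x H) as [L1 H1]. destruct (fd_im F x H) as [L2 H2].
  split.
  - exact (fd_deriv (fun z => Re (F z)) x k L1 H1).
  - exact (fd_deriv (fun z => Im (F z)) x k L2 H2).
Qed.

Lemma D1_const k (c : C) x : D1 k (fun _ => c) x (RtoC 0).
Proof. split; apply (is_derive_const (V := R_NormedModule)). Qed.

Lemma D1_plus k F G x a b : D1 k F x a -> D1 k G x b ->
  D1 k (fun y => Cplus (F y) (G y)) x (Cplus a b).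
Proof.
  intros [F1 F2] [G1 G2]. split.
  - exact (is_derive_plus _ _ _ _ _ F1 G1).
  - exact (is_derive_plus _ _ _ _ _ F2 G2).
Qed.

Lemma D1_opp k F x a : D1 k F x a -> D1 k (fun y => Copp (F y)) x (Copp a).
Proof.
  intros [F1 F2]. split.
  - exact (is_derive_opp _ _ _ F1).
  - exact (is_derive_opp _ _ _ F2).
Qed.

Lemma D1_minus k F G x a b : D1 k F x a -> D1 k G x b ->
  D1 k (fun y => Cminus (F y) (G y)) x (Cminus a b).
Proof. intros HF HG. apply D1_plus; [exact HF|apply D1_opp; exact HG]. Qed.

Ltac rnorm := repeat match goal with
 | |- context [@mult ?K ?a ?b] => change (@mult K a b) with (Rmult a b)
 | |- context [@plus ?K ?a ?b] => change (@plus K a b) with (Rplus a b)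
 | |- context [@minus ?K ?a ?b] => change (@minus K a b) with (Rminus a b)
 | |- context [@opp ?K ?a] => change (@opp K a) with (Ropp a)
 | |- context [@scal ?K ?V ?a ?b] => change (@scal K V a b) with (Rmult a b)
end.

Ltac Req := match goal with |- ?a = ?b => change (@eq R a b) end.

Lemma D1_mult k F G x a b : D1 k F x a -> D1 k G x b ->
  D1 k (fun y => Cmult (F y) (G y)) x (Cplus (Cmult a (G x)) (Cmult (F x) b)).
Proof.
  intros [F1 F2] [G1 G2]. split.
  - eapply is_derive_eq.
    { exact (is_derive_minus _ _ _ _ _ (is_derive_mult _ _ _ _ _ F1 G1 Rmc)
                                     (is_derive_mult _ _ _ _ _ F2 G2 Rmc)). }
    simpl. rewrite shift0. unfold Re, Im. Req. rnorm. ring.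
  - eapply is_derive_eq.
    { exact (is_derive_plus _ _ _ _ _ (is_derive_mult _ _ _ _ _ F1 G2 Rmc)
                                     (is_derive_mult _ _ _ _ _ F2 G1 Rmc)). }
    simpl. rewrite shift0. unfold Re, Im. Req. rnorm. ring.
Qed.

Lemma C_nz (z : C) : z <> C0 -> fst z ^ 2 + snd z ^ 2 <> 0.
Proof.
  intros Hz E. apply Hz. destruct z as [p q]. simpl in E.
  assert (p = 0) by nra. assert (q = 0) by nra. subst. reflexivity.
Qed.

Lemma D1_inv k F x a : D1 k F x a -> F x <> C0 ->
  D1 k (fun y => Cinv (F y)) x (Copp (Cmult a (Cmult (Cinv (F x)) (Cinv (F x))))).
Proof.
  intros [F1 F2] Hnz. assert (Hn := C_nz _ Hnz).
  assert (Hg : is_derive (fun t => fst (F (shift k x t)) ^ 2 + snd (F (shift k x t)) ^ 2) 0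
     (INR 2 * Re a * Re (F (shift k x 0)) ^ Init.Nat.pred 2 + INR 2 * Im a * Im (F (shift k x 0)) ^ Init.Nat.pred 2)).
  { exact (is_derive_plus _ _ _ _ _ (is_derive_pow _ 2 _ _ F1) (is_derive_pow _ 2 _ _ F2)). }
  rewrite shift0 in Hg.
  split.
  - eapply is_derive_eq.
    { apply (is_derive_div (fun t => fst (F (shift k x t))) _ _ _ _ F1 Hg).
      rewrite shift0. exact Hn. }
    rewrite shift0. destruct a as [a1 a2]. destruct (F x) as [p q]. unfold Re, Im. simpl.
    field; simpl in Hn; intro E; apply Hn; nra.
  - eapply is_derive_eq.
    { apply (is_derive_div (fun t => - snd (F (shift k x t))) _ _ _ _ (is_derive_opp _ _ _ F2) Hg).
      rewrite shift0. exact Hn. }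
    rewrite shift0. destruct a as [a1 a2]. destruct (F x) as [p q]. unfold Re, Im. simpl.
    change (opp a2) with (- a2). field; simpl in Hn; intro E; apply Hn; nra.
Qed.

Lemma pd_const k (c : C) x : pd k (fun _ => c) x = RtoC 0.
Proof. apply D1_pd, D1_const. Qed.
Lemma Re_pd j F y : Re (pd j F y) = P j (fun z => Re (F z)) y.
Proof. reflexivity. Qed.
Lemma pd_P k F x : pd k F x = (P k (fun z => Re (F z)) x, P k (fun z => Im (F z)) x).
Proof. reflexivity. Qed.
Lemma sym_C (Om : R3 -> Prop) F x j k :
  (exists r : posreal, forall y, ball x r y -> Om y) ->
  twice_diff_on Om F -> Om x -> (1 <= j <= 3)%nat -> (1 <= k <= 3)%nat ->
  pd k (pd j F) x = pd j (pd k F) x.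
Proof.
  intros [r Hr] HF Hx Hj Hk.
  rewrite (pd_P k (pd j F)), (pd_P j (pd k F)).
  assert (E1 : (fun z => Re (pd j F z)) = P j (fun z => Re (F z))) by reflexivity.
  assert (E2 : (fun z => Im (pd j F z)) = P j (fun z => Im (F z))) by reflexivity.
  assert (E3 : (fun z => Re (pd k F z)) = P k (fun z => Re (F z))) by reflexivity.
  assert (E4 : (fun z => Im (pd k F z)) = P k (fun z => Im (F z))) by reflexivity.
  assert (B1 : exists r : posreal, forall y, ball x r y -> exists L, filterdiff (fun z => Re (F z)) (locally y) L).
  { exists r. intros y Hy. exact (fd_re F y (proj1 (HF y (Hr y Hy)))). }
  assert (B2 : exists r : posreal, forall y, ball x r y -> exists L, filterdiff (fun z => Im (F z)) (locally y) L).
  { exists r. intros y Hy. exact (fd_im F y (proj1 (HF y (Hr y Hy)))). }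
  assert (C1 : exists L, filterdiff (P j (fun z => Re (F z))) (locally x) L).
  { rewrite <- E1. exact (fd_re (pd j F) x (proj2 (HF x Hx) j Hj)). }
  assert (C2 : exists L, filterdiff (P j (fun z => Im (F z))) (locally x) L).
  { rewrite <- E2. exact (fd_im (pd j F) x (proj2 (HF x Hx) j Hj)). }
  assert (C3 : exists L, filterdiff (P k (fun z => Re (F z))) (locally x) L).
  { rewrite <- E3. exact (fd_re (pd k F) x (proj2 (HF x Hx) k Hk)). }
  assert (C4 : exists L, filterdiff (P k (fun z => Im (F z))) (locally x) L).
  { rewrite <- E4. exact (fd_im (pd k F) x (proj2 (HF x Hx) k Hk)). }
  rewrite E1, E2, E3, E4.

  f_equal; [exact (sym _ x j k B1 C1 C3) | exact (sym _ x j k B2 C2 C4)].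
Qed.

Lemma Cm1 : RtoC (-1) = Copp (RtoC 1).
Proof. apply injective_projections; simpl; ring. Qed.

Theorem proposition1 (Om : R3 -> Prop) (phi psi : R3 -> C) :
  domain3 Om ->
  twice_diff_on Om phi ->
  (forall x, Om x -> phi x <> C0) ->
  twice_diff_on Om psi ->
  (* psi solves -Lap psi + v psi = 0 with v = Lap phi / phi *)
  (forall x, Om x ->
     Cplus (Copp (laplacian psi x)) (Cmult (Cdiv (laplacian phi x) (phi x)) (psi x)) = C0) ->
  let alpha : R3 -> CV := fun x => vscal (Cinv (phi x)) (grad phi x) in
  let f : R3 -> BQ := fun x =>
    qsub (Dop (fun y => qscal (psi y)) x) (qmul (qvec (alpha x)) (qscal (psi x))) in
  forall x, Om x -> qadd (Dop f x) (Mr (qvec (alpha x)) (f x)) = qzero.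
Proof.
  intros Hdom Hphi Hnz Hpsi Hlap alpha f x Hx.
  set (g := fun (j : nat) y => Cminus (pd j psi y) (Cmult (psi y) (Cmult (Cinv (phi y)) (pd j phi y)))).
  assert (Ef : forall y, f y = (C0, (g 1%nat y, g 2%nat y, g 3%nat y))).
  { intros y.
    cbv beta iota zeta delta [f g alpha qsub qadd qopp Dop pdq qmul qscal qvec i1 i2 i3
      vadd vscal vdot vcross grad vzero fst snd].
    rewrite !pd_const, Cm1. unfold C0, Defs.C1.
    change (fun y0 : R3 => psi y0) with psi.
    apply injective_projections; [|apply injective_projections; [apply injective_projections|]];
      cbn [fst snd]; ring.
  }
  assert (Ef' : f = fun y => (C0, (g 1%nat y, g 2%nat y, g 3%nat y)))
    by (apply functional_extensionality; exact Ef).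
  clearbody f. subst f.
  assert (Hball : exists r : posreal, forall y, ball x r y -> Om y).
  { destruct Hdom as [Hop _]. exact (Hop x Hx). }
  assert (Hn := Hnz x Hx).
  assert (Hd : forall j k, (1 <= j <= 3)%nat ->
    pd k (fun y => Cminus (pd j psi y) (Cmult (psi y) (Cmult (Cinv (phi y)) (pd j phi y)))) x =
    Cminus (pd k (pd j psi) x)
      (Cplus (Cmult (pd k psi x) (Cmult (Cinv (phi x)) (pd j phi x)))
         (Cmult (psi x) (Cplus (Cmult (Copp (Cmult (pd k phi x) (Cmult (Cinv (phi x)) (Cinv (phi x))))) (pd j phi x))
                               (Cmult (Cinv (phi x)) (pd k (pd j phi) x)))))).
  { intros j k Hj. apply D1_pd. apply D1_minus.
    - apply D1_basic. exact (proj2 (Hpsi x Hx) j Hj).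
    - apply D1_mult. apply D1_basic. exact (proj1 (Hpsi x Hx)).
      apply D1_mult. apply D1_inv. apply D1_basic. exact (proj1 (Hphi x Hx)). exact Hn.
      apply D1_basic. exact (proj2 (Hphi x Hx) j Hj). }
  cbv beta iota zeta delta [g alpha Dop pdq qmul qadd Mr qvec qzero vzero vadd vscal vdot vcross
    grad i1 i2 i3 fst snd].
  rewrite !pd_const.
  rewrite !Hd by lia.
  rewrite (sym_C Om psi x 1 2 Hball Hpsi Hx ltac:(lia) ltac:(lia)),
          (sym_C Om psi x 1 3 Hball Hpsi Hx ltac:(lia) ltac:(lia)),
          (sym_C Om psi x 2 3 Hball Hpsi Hx ltac:(lia) ltac:(lia)),
          (sym_C Om phi x 1 2 Hball Hphi Hx ltac:(lia) ltac:(lia)),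
          (sym_C Om phi x 1 3 Hball Hphi Hx ltac:(lia) ltac:(lia)),
          (sym_C Om phi x 2 3 Hball Hphi Hx ltac:(lia) ltac:(lia)).
  unfold C0, Defs.C1 in *.
  apply injective_projections; [|apply injective_projections; [apply injective_projections|]];
    cbn [fst snd].
  - etransitivity; [|exact (Hlap x Hx)]. unfold laplacian. field. exact Hn.
  - field. exact Hn.
  - field. exact Hn.
  - field. exact Hn.
Qed.
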